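(* Let $P_1,Q_1\in GL(2,\mathbb R)$, where $P_1$ has the pair of complex conjugate eigenvalues $\cos\alpha\pm i\sin\alpha$ with $\alpha\in(-\pi/2,\pi/2]$ and $\alpha/\pi\notin\mathbb Q$. If $f\colon\overline{\mathbb R}\to\overline{\mathbb R}$ is a homeomorphism with $f(P_1(x))=Q_1(f(x))$ for all $x\in\overline{\mathbb R}$, then $f$ is a nondegenerate linear-fractional transformation, i.e. $f(x)=\frac{ax+b}{cx+d}$ for some real $a,b,c,d$ with $ad-bc\neq0$.
   Context: $\overline{\mathbb R}=\mathbb R\cup\{\infty\}$. A matrix $\begin{pmatrix}a&b\\c&d\end{pmatrix}\in GL(2,\mathbb R)$ acts on $\overline{\mathbb R}$ by $x\mapsto\frac{ax+b}{cx+d}$. *)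

(* Defs.v *)
From Stdlib Require Import Reals.
Open Scope R_scope.

(* The extended real line R ∪ {∞}: [Some x] is the real x, [None] is ∞. *)
Definition Rbar := option R.

Definition mobius (a b c d : R) (x : Rbar) : Rbar :=
  match x with
  | Some t => if Req_EM_T (c * t + d) 0 then None
              else Some ((a * t + b) / (c * t + d))
  | None => if Req_EM_T c 0 then None else Some (a / c)
  end.

(* Topology of Rbar = one-point compactification of R. *)
Definition open_R (U : R -> Prop) : Prop :=
  forall x, U x -> exists eps, 0 < eps /\ forall y, Rabs (y - x) < eps -> U y.

Definition open_Rbar (U : Rbar -> Prop) : Prop :=
  open_R (fun x => U (Some x)) /\
  (U None -> exists M, forall x, M < Rabs x -> U (Some x)).

Definition continuous_Rbar (f : Rbar -> Rbar) : Prop :=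
  forall U, open_Rbar U -> open_Rbar (fun x => U (f x)).

Definition homeomorphism_Rbar (f : Rbar -> Rbar) : Prop :=
  exists g : Rbar -> Rbar,
    (forall x, g (f x) = x) /\ (forall y, f (g y) = y) /\
    continuous_Rbar f /\ continuous_Rbar g.

(* u + i v is a (complex) eigenvalue of the real matrix [[a b];[c d]]:
   there is a nonzero z = (x1 + i y1, x2 + i y2) in C^2 with M z = (u + i v) z,
   written out in real and imaginary parts. *)
Definition complex_eigenvalue (a b c d u v : R) : Prop :=
  exists x1 y1 x2 y2 : R,
    ~ (x1 = 0 /\ y1 = 0 /\ x2 = 0 /\ y2 = 0) /\
    a * x1 + b * x2 = u * x1 - v * y1 /\
    a * y1 + b * y2 = u * y1 + v * x1 /\
    c * x1 + d * x2 = u * x2 - v * y2 /\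
    c * y1 + d * y2 = u * y2 + v * x2.

Definition rational (r : R) : Prop :=
  exists p q : Z, (q <> 0)%Z /\ r = IZR p / IZR q.

(* Main.v *)
Require Import Defs.
From Stdlib Require Import Reals Lra Lia Psatz ZArith Classical.
Open Scope R_scope.


Definition proj (w1 w2 : R) : Rbar := if Req_EM_T w2 0 then None else Some (w1/w2).
Definition Cp (t:R) : Rbar := proj (cos t) (sin t).

Lemma mob_proj a b c d w1 w2 : ~(w1 = 0 /\ w2 = 0) ->
  mobius a b c d (proj w1 w2) = proj (a*w1+b*w2) (c*w1+d*w2).
Proof.
  intros Hw; unfold proj, mobius.
  destruct (Req_EM_T w2 0) as [E|E].
  - subst. destruct (Req_EM_T c 0) as [E1|E1]; destruct (Req_EM_T (c*w1+d*0) 0) as [E2|E2]; auto.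
    + exfalso; apply E2; subst; ring.
    + exfalso. assert (w1 <> 0) by tauto. apply E1. 
      assert (c*w1 = 0) by lra. destruct (Rmult_integral _ _ H0); tauto.
    + f_equal. assert (w1 <> 0) by tauto. replace (c*w1+d*0) with (c*w1) by ring. replace (a*w1+b*0) with (a*w1) by ring. field. split; auto.
  - destruct (Req_EM_T (c*(w1/w2)+d) 0) as [E1|E1]; destruct (Req_EM_T (c*w1+d*w2) 0) as [E2|E2]; auto.
    + exfalso; apply E2. replace (c*w1+d*w2) with ((c*(w1/w2)+d)*w2) by (field; auto). rewrite E1; ring.
    + exfalso; apply E1. replace (c*(w1/w2)+d) with ((c*w1+d*w2)/w2) by (field; auto). rewrite E2; field; auto.
    + f_equal. field. repeat split; auto.
Qed.

Lemma proj_scale l w1 w2 : l <> 0 -> proj (l*w1) (l*w2) = proj w1 w2.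
Proof.
  intros Hl; unfold proj.
  destruct (Req_EM_T (l*w2) 0) as [E|E]; destruct (Req_EM_T w2 0) as [E2|E2]; auto.
  - exfalso. destruct (Rmult_integral _ _ E); tauto.
  - exfalso. subst. apply E; ring.
  - f_equal; field; auto.
Qed.

Lemma proj_surj x : exists w1 w2, ~(w1 = 0 /\ w2 = 0) /\ x = proj w1 w2.
Proof.
  destruct x as [r|].
  - exists r, 1. split; [lra|]. unfold proj. destruct (Req_EM_T 1 0); [lra|]. f_equal; field.
  - exists 1, 0. split; [lra|]. unfold proj. destruct (Req_EM_T 0 0); [auto|lra].
Qed.

Lemma vec_nz a b c d w1 w2 : a*d-b*c <> 0 -> ~(w1 = 0 /\ w2 = 0) ->
  ~(a*w1+b*w2 = 0 /\ c*w1+d*w2 = 0).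
Proof.
  intros Hd Hw [H1 H2]. apply Hw.
  assert (E1 : (a*d-b*c)*w1 = 0) by
    (replace ((a*d-b*c)*w1) with (d*(a*w1+b*w2) - b*(c*w1+d*w2)) by ring; rewrite H1, H2; ring).
  assert (E2 : (a*d-b*c)*w2 = 0) by
    (replace ((a*d-b*c)*w2) with (a*(c*w1+d*w2) - c*(a*w1+b*w2)) by ring; rewrite H1, H2; ring).
  destruct (Rmult_integral _ _ E1); [tauto|]. destruct (Rmult_integral _ _ E2); [tauto|]. auto.
Qed.

Lemma mob_comp a b c d a' b' c' d' x : a'*d'-b'*c' <> 0 ->
  mobius a b c d (mobius a' b' c' d' x) =
  mobius (a*a'+b*c') (a*b'+b*d') (c*a'+d*c') (c*b'+d*d') x.
Proof.
  intros Hd. destruct (proj_surj x) as [w1 [w2 [Hw ->]]].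
  rewrite (mob_proj a' b' c' d') by auto.
  rewrite mob_proj by (apply vec_nz; auto).
  rewrite mob_proj by auto.
  f_equal; ring.
Qed.

Lemma mob_scalar l x : l <> 0 -> mobius l 0 0 l x = x.
Proof.
  intros Hl. destruct (proj_surj x) as [w1 [w2 [Hw ->]]].
  rewrite mob_proj by auto. replace (l*w1+0*w2) with (l*w1) by ring.
  replace (0*w1+l*w2) with (l*w2) by ring. apply proj_scale; auto.
Qed.

Lemma mob_inv a b c d x : a*d-b*c <> 0 -> mobius d (-b) (-c) a (mobius a b c d x) = x.
Proof.
  intros H. rewrite mob_comp by auto.
  replace (d*a+-b*c) with (a*d-b*c) by ring. replace (d*b+-b*d) with 0 by ring.
  replace (-c*a+a*c) with 0 by ring. replace (-c*b+a*d) with (a*d-b*c) by ring.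
  apply mob_scalar; auto.
Qed.

Lemma mob_inv' a b c d x : a*d-b*c <> 0 -> mobius a b c d (mobius d (-b) (-c) a x) = x.
Proof.
  intros H. rewrite mob_comp by (intro; apply H; lra).
  replace (a*d+b*-c) with (a*d-b*c) by ring. replace (a*-b+b*a) with 0 by ring.
  replace (c*d+d*-c) with 0 by ring. replace (c*-b+d*a) with (a*d-b*c) by ring.
  apply mob_scalar; auto.
Qed.

Lemma Cp_shift t g : Cp (t+g) = mobius (cos g) (- sin g) (sin g) (cos g) (Cp t).
Proof.
  unfold Cp. rewrite mob_proj.
  - rewrite cos_plus, sin_plus. f_equal; ring.
  - intros [H1 H2]. pose proof (sin2_cos2 t). unfold Rsqr in H. nra.
Qed.

Lemma Cp_eq_shift a b g : Cp a = Cp b -> Cp (a+g) = Cp (b+g).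
Proof. intros H. rewrite !Cp_shift, H. auto. Qed.

Lemma Cp_None t : Cp t = None <-> sin t = 0.
Proof. unfold Cp, proj. destruct (Req_EM_T (sin t) 0); split; intros; auto; try discriminate; contradiction. Qed.

Lemma Cp_0 : Cp 0 = None.
Proof. apply Cp_None. apply sin_0. Qed.

Lemma Cp_PI t : Cp (t + PI) = Cp t.
Proof. unfold Cp. rewrite neg_cos, neg_sin. replace (-cos t) with (-1*cos t) by ring.
  replace (-sin t) with (-1*sin t) by ring. apply proj_scale. lra. Qed.

Lemma Cp_period t (z:Z) : Cp (t + IZR z * PI) = Cp t.
Proof.
  assert (Hn : forall n:nat, forall t, Cp (t + INR n * PI) = Cp t).
  { induction n; intros s. - simpl. f_equal; ring.
    - rewrite S_INR. replace (s + (INR n + 1)*PI) with ((s + INR n * PI) + PI) by ring.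
      rewrite Cp_PI. auto. }
  destruct z.
  - simpl. f_equal; ring.
  - rewrite <- positive_nat_Z, <- INR_IZR_INZ. apply Hn.
  - rewrite <- (Hn (Pos.to_nat p) (t + IZR (Z.neg p) * PI)).
    f_equal. rewrite INR_IZR_INZ, positive_nat_Z. rewrite <- Pos2Z.opp_pos, opp_IZR. ring.
Qed.

Lemma Cp_surj x : exists t, x = Cp t.
Proof.
  destruct x as [r|].
  - exists (PI/2 - atan r). unfold Cp, proj. rewrite sin_shift, cos_shift.
    pose proof (atan_bound r). assert (0 < cos (atan r)) by (apply cos_gt_0; lra).
    destruct (Req_EM_T (cos (atan r)) 0); [lra|]. f_equal.
    rewrite <- (atan_right_inv r) at 1. unfold tan. auto.
  - exists 0. symmetry. apply Cp_0.
Qed.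


Lemma cpt_eps f x eps : continuity_pt f x -> 0 < eps ->
  exists del, 0 < del /\ forall y, Rabs (y - x) < del -> Rabs (f y - f x) < eps.
Proof.
  intros H He. destruct (H eps He) as [del [Hd Hy]]. exists del; split; auto.
  intros y Hyx. destruct (Req_dec y x) as [->|Hne].
  - unfold Rminus; rewrite Rplus_opp_r, Rabs_R0; auto.
  - apply (Hy y). split. + split; [constructor|auto].
    + simpl. unfold R_dist. auto.
Qed.

Lemma rat_cont a b c d x eps : c*x+d <> 0 -> 0 < eps ->
  exists del, 0 < del /\ forall y, Rabs (y - x) < del ->
    c*y+d <> 0 /\ Rabs ((a*y+b)/(c*y+d) - (a*x+b)/(c*x+d)) < eps.
Proof.
  intros Hx He.
  assert (Hc : continuity_pt (fun y => (a*y+b)/(c*y+d)) x) by (reg; auto).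
  assert (Hc2 : continuity_pt (fun y => c*y+d) x) by reg.
  destruct (cpt_eps _ _ _ Hc He) as [d1 [Hd1 H1]].
  assert (He2 : 0 < Rabs (c*x+d)) by (apply Rabs_pos_lt; auto).
  destruct (cpt_eps _ _ _ Hc2 He2) as [d2 [Hd2 H2]].
  exists (Rmin d1 d2). split. { apply Rmin_pos; auto. }
  intros y Hy. assert (Rabs (y-x) < d1) by (apply Rlt_le_trans with (Rmin d1 d2); [exact Hy|apply Rmin_l]).
  assert (Rabs (y-x) < d2) by (apply Rlt_le_trans with (Rmin d1 d2); [exact Hy|apply Rmin_r]).
  split.
  - intro E. specialize (H2 y H0). simpl in H2. rewrite E in H2.
    replace (0 - (c*x+d)) with (-(c*x+d)) in H2 by ring. rewrite Rabs_Ropp in H2. lra.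
  - apply (H1 y H).
Qed.

Lemma open_ball r eps : open_Rbar (fun y => match y with Some z => Rabs (z - r) < eps | None => False end).
Proof.
  split.
  - intros x Hx. exists (eps - Rabs (x - r)). split; [lra|].
    intros y Hy. pose proof (Rabs_triang (y - x) (x - r)).
    replace (y - x + (x - r)) with (y - r) in H by ring. lra.
  - intros [].
Qed.

Lemma cont_comp (f g : Rbar -> Rbar) : continuous_Rbar f -> continuous_Rbar g ->
  continuous_Rbar (fun x => f (g x)).
Proof. intros Hf Hg U HU. apply (Hg (fun y => U (f y))). apply Hf; auto. Qed.

Lemma big_inv r M : r <> 0 -> Rabs r < / (Rabs M + 1) -> M < Rabs (/ r).
Proof.
  intros Hr H. rewrite Rabs_inv. assert (0 < Rabs r) by (apply Rabs_pos_lt; auto).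
  assert (M <= Rabs M) by apply RRle_abs. pose proof (Rabs_pos M).
  apply Rlt_le_trans with (Rabs M + 1); [lra|].
  rewrite <- (Rinv_inv (Rabs M + 1)). apply Rinv_le_contravar; [auto|lra].
Qed.

Lemma mob_cont a b c d : a*d - b*c <> 0 -> continuous_Rbar (mobius a b c d).
Proof.
  intros Hdet U [HUr HUi]. split.
  - intros x Hx. simpl in Hx. destruct (Req_EM_T (c*x+d) 0) as [E|E].
    + destruct (HUi Hx) as [M HM].
      assert (Hax : a*x+b <> 0).
      { intro E2. apply Hdet.
        replace (a*d-b*c) with (a*(c*x+d) - c*(a*x+b)) by ring. rewrite E, E2; ring. }
      assert (Hp : 0 < / (Rabs M + 1)) by (apply Rinv_0_lt_compat; pose proof (Rabs_pos M); lra).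
      destruct (rat_cont c d a b x _ Hax Hp) as [del [Hdel H]].
      exists del; split; auto. intros y Hy. simpl.
      destruct (Req_EM_T (c*y+d) 0) as [E2|E2]; auto.
      apply HM. destruct (H y Hy) as [Hy1 Hy2].
      rewrite E in Hy2. replace (0/(a*x+b)) with 0 in Hy2 by (field; auto).
      rewrite Rminus_0_r in Hy2.
      replace ((a*y+b)/(c*y+d)) with (/ ((c*y+d)/(a*y+b))) by (field; auto).
      apply big_inv; auto. unfold Rdiv. intro E3. destruct (Rmult_integral _ _ E3); auto.
      apply (Rinv_neq_0_compat _ Hy1); auto.
    + destruct (HUr _ Hx) as [eps [He HU]].
      destruct (rat_cont a b c d x _ E He) as [del [Hdel H]].
      exists del; split; auto. intros y Hy. simpl.
      destruct (H y Hy) as [Hy1 Hy2].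
      destruct (Req_EM_T (c*y+d) 0) as [E2|E2]; [contradiction|]. apply HU; auto.
  - intros HN. simpl in HN. destruct (Req_EM_T c 0) as [Ec|Ec].
    + subst c. destruct (HUi HN) as [M HM].
      assert (Hd : d <> 0) by (intro; apply Hdet; subst; ring).
      assert (Ha : a <> 0) by (intro; apply Hdet; subst; ring).
      assert (Hp : 0 < / (Rabs M + 1)) by (apply Rinv_0_lt_compat; pose proof (Rabs_pos M); lra).
      assert (Hba : b*0 + a <> 0) by lra.
      destruct (rat_cont d 0 b a 0 _ Hba Hp) as [del [Hdel H]].
      exists (/ del). intros x Hx. simpl.
      destruct (Req_EM_T (0*x+d) 0) as [E2|E2]; [lra|].
      assert (Hx0 : x <> 0).
      { intro; subst. rewrite Rabs_R0 in Hx. pose proof (Rinv_0_lt_compat _ Hdel). lra. }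
      assert (Hu : Rabs (/x - 0) < del).
      { rewrite Rminus_0_r, Rabs_inv. rewrite <- (Rinv_inv del). apply Rinv_lt_contravar; auto.
        apply Rmult_lt_0_compat; [apply Rinv_0_lt_compat; auto|]. apply Rabs_pos_lt; auto. }
      destruct (H _ Hu) as [H1 H2].
      replace ((d*0+0)/(b*0+a)) with 0 in H2 by (field; auto). rewrite Rminus_0_r in H2.
      apply HM. replace ((a*x+b)/(0*x+d)) with (/ ((d*/x+0)/(b*/x+a))).
      * apply big_inv; auto. unfold Rdiv. intro E3. destruct (Rmult_integral _ _ E3) as [E4|E4].
        -- replace (d*/x+0) with (d*/x) in E4 by ring. destruct (Rmult_integral _ _ E4); auto.
           apply (Rinv_neq_0_compat x); auto.
        -- apply (Rinv_neq_0_compat _ H1); auto.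
      * field. repeat split; auto. intro E5. apply H1. replace (b*/x+a) with ((b+a*x)/x) by (field; auto). rewrite E5; field; auto.

    + destruct (HUr _ HN) as [eps [He HU]].
      assert (Hc : d*0 + c <> 0) by lra.
      destruct (rat_cont b a d c 0 _ Hc He) as [del [Hdel H]].
      exists (/ del). intros x Hx. simpl.
      assert (Hx0 : x <> 0).
      { intro; subst. rewrite Rabs_R0 in Hx. pose proof (Rinv_0_lt_compat _ Hdel). lra. }
      assert (Hu : Rabs (/x - 0) < del).
      { rewrite Rminus_0_r, Rabs_inv. rewrite <- (Rinv_inv del). apply Rinv_lt_contravar; auto.
        apply Rmult_lt_0_compat; [apply Rinv_0_lt_compat; auto|]. apply Rabs_pos_lt; auto. }
      destruct (H _ Hu) as [H1 H2].
      destruct (Req_EM_T (c*x+d) 0) as [E2|E2].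
      * exfalso. apply H1. replace (d*/x+c) with ((c*x+d)/x) by (field; auto). rewrite E2; field; auto.
      * apply HU. replace ((a*x+b)/(c*x+d)) with ((b*/x+a)/(d*/x+c)).
        -- replace (a/c) with ((b*0+a)/(d*0+c)) by (field; auto). auto.
        -- field. repeat split; auto.

Qed.


Lemma incr_aux (k : R -> R) : continuity k -> (forall x y, k x = k y -> x = y) ->
  k 0 < k 1 -> forall x y, x < y -> k x < k y.
Proof.
  intros Hc Hi H01 x y Hxy.
  destruct (Rtotal_order (k x) (k y)) as [H|[E|E]]; auto; exfalso.
  - apply Hi in E. lra.
  - assert (HG : continuity (fun s => k (s*x) - k ((1-s)*1 + s*y))) by reg.
    destruct (IVT _ 0 1 HG) as [z [Hz Hz0]].
    + lra.
    + replace (0*x) with 0 by ring. replace ((1-0)*1+0*y) with 1 by ring. lra.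
    + replace (1*x) with x by ring. replace ((1-1)*1+1*y) with y by ring. lra.
    + assert (E2 : k (z*x) = k ((1-z)*1 + z*y)) by lra.
      apply Hi in E2. destruct Hz as [Hz1 Hz2]. assert (0 <= z*(y-x)) by (apply Rmult_le_pos; lra). destruct (Req_dec z 1) as [->|Hz3]; [lra|]. lra.
Qed.

Lemma inj_mono (k : R -> R) : continuity k -> (forall x y, k x = k y -> x = y) ->
  (forall x y, x < y -> k x < k y) \/ (forall x y, x < y -> k y < k x).
Proof.
  intros Hc Hi. destruct (Rtotal_order (k 0) (k 1)) as [H|[E|E]].
  - left. apply incr_aux; auto.
  - apply Hi in E. lra.
  - right. intros x y Hxy.
    assert (Hc' : continuity (fun x => - k x)) by reg.
    assert (Hi' : forall x y, - k x = - k y -> x = y) by (intros; apply Hi; lra).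
    pose proof (incr_aux (fun x => - k x) Hc' Hi' ltac:(lra) x y Hxy). simpl in H. lra.
Qed.

Lemma k_cont (h : Rbar -> Rbar) (k : R -> R) : continuous_Rbar h ->
  (forall x, h (Some x) = Some (k x)) -> continuity k.
Proof.
  intros Hh Hk x. unfold continuity_pt, continue_in, limit1_in, limit_in.
  intros eps He. destruct (Hh _ (open_ball (k x) eps)) as [Hr _].
  destruct (Hr x) as [del [Hd H]].
  { simpl. rewrite Hk. unfold Rminus. rewrite Rplus_opp_r, Rabs_R0. auto. }
  exists del. split; auto. intros y [_ Hy]. simpl in Hy |- *. unfold R_dist in *.
  specialize (H y Hy). simpl in H. rewrite Hk in H. auto.
Qed.


Lemma php : forall N (b : nat -> nat), (forall n, (n <= N)%nat -> (b n < N)%nat) ->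
  exists i j, (i < j <= N)%nat /\ b i = b j.
Proof.
  induction N as [|N IH]; intros b Hb.
  - specialize (Hb 0%nat (le_n 0)). lia.
  - set (v := b (S N)).
    assert (Hv : (v < S N)%nat) by (apply Hb; lia).
    destruct (classic (exists i, (i <= N)%nat /\ b i = v)) as [[i [Hi Hbi]]|Hno].
    + exists i, (S N). split; [lia|auto].
    + set (b' := fun n => if (b n <? v)%nat then b n else (b n - 1)%nat).
      assert (Hne : forall n, (n <= N)%nat -> b n <> v) by (intros n Hn E; apply Hno; eauto).
      destruct (IH b') as [i [j [Hij Hb']]].
      { intros n Hn. unfold b'. pose proof (Hb n ltac:(lia)). pose proof (Hne n Hn).
        destruct (Nat.ltb_spec (b n) v); lia. }
      exists i, j. split; [lia|]. unfold b' in Hb'.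
      pose proof (Hne i ltac:(lia)). pose proof (Hne j ltac:(lia)).
      destruct (Nat.ltb_spec (b i) v); destruct (Nat.ltb_spec (b j) v); lia.
Qed.

Lemma ip_bounds x : IZR (Int_part x) <= x < IZR (Int_part x) + 1.
Proof. pose proof (base_Int_part x). lra. Qed.

Lemma ip_nonneg x : 0 <= x -> (0 <= Int_part x)%Z.
Proof. intros H. pose proof (ip_bounds x). apply le_IZR. 
  assert (-1 < IZR (Int_part x)) by lra. apply lt_IZR in H1. apply IZR_le. lia. Qed.

Lemma dirichlet th N : (0 < N)%nat -> exists m:nat, exists p:Z,
  (1 <= m)%nat /\ Rabs (INR m * th - IZR p) < / INR N.
Proof.
  intros HN.
  set (fr := fun x => x - IZR (Int_part x)).
  assert (Hfr : forall x, 0 <= fr x < 1) by (intros x; unfold fr; pose proof (ip_bounds x); lra).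
  assert (HNpos : 0 < INR N) by (apply lt_0_INR; auto).
  set (b := fun n:nat => Z.to_nat (Int_part (INR N * fr (INR n * th)))).
  destruct (php N b) as [i [j [Hij Hb]]].
  { intros n Hn. unfold b. set (y := INR N * fr (INR n * th)).
    assert (0 <= y < INR N) by (unfold y; pose proof (Hfr (INR n * th)); nra).
    pose proof (ip_nonneg y ltac:(lra)). pose proof (ip_bounds y).
    assert (IZR (Int_part y) < IZR (Z.of_nat N)) by (rewrite <- INR_IZR_INZ; lra).
    apply lt_IZR in H2. lia. }
  exists (j - i)%nat, (Int_part (INR j * th) - Int_part (INR i * th))%Z. split; [lia|].
  unfold b in Hb.
  set (yi := INR N * fr (INR i * th)) in Hb. set (yj := INR N * fr (INR j * th)) in Hb.
  assert (0 <= yi) by (unfold yi; pose proof (Hfr (INR i * th)); nra).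
  assert (0 <= yj) by (unfold yj; pose proof (Hfr (INR j * th)); nra).
  pose proof (ip_nonneg _ H). pose proof (ip_nonneg _ H0).
  assert (Int_part yi = Int_part yj) by lia.
  pose proof (ip_bounds yi). pose proof (ip_bounds yj). rewrite H3 in H4.
  assert (Rabs (yj - yi) < 1) by (apply Rabs_def1; lra).
  rewrite minus_INR by lia. rewrite minus_IZR.
  replace ((INR j - INR i) * th - (IZR (Int_part (INR j * th)) - IZR (Int_part (INR i * th))))
    with ((yj - yi) / INR N) by (unfold yi, yj, fr; field; lra).
  unfold Rdiv. rewrite Rabs_mult, Rabs_inv, (Rabs_right (INR N)) by lra.
  apply Rmult_lt_reg_r with (INR N); auto. rewrite Rmult_assoc, Rinv_l by lra. lra.
Qed.

Lemma density th a b : ~ rational th -> 0 <= a -> a < b -> b <= 1 ->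
  exists n:nat, exists j:Z, (1 <= n)%nat /\ a < INR n * th - IZR j < b.
Proof.
  intros Hirr Ha Hab Hb.
  destruct (archimed_cor1 (b - a) ltac:(lra)) as [N [HN HN0]].
  destruct (dirichlet th N HN0) as [m [p [Hm Hd]]].
  set (d := INR m * th - IZR p) in Hd.
  assert (Hm0 : 0 < INR m) by (apply lt_0_INR; lia).
  assert (Hd0 : d <> 0).
  { intro E. apply Hirr. exists p, (Z.of_nat m). split; [lia|].
    rewrite <- INR_IZR_INZ. unfold d in E. field_simplify_eq; [lra|lra]. }
  assert (Hdab : Rabs d < b - a) by lra.
  assert (Hstep : forall c e, 0 <= c -> 0 < e -> exists q:Z, (1 <= q)%Z /\ c < IZR q * e <= c + e).
  { intros c e Hc He. exists (Int_part (c / e) + 1)%Z.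
    pose proof (ip_nonneg (c/e) ltac:(apply Rmult_le_pos; [lra|left; apply Rinv_0_lt_compat; lra])).
    pose proof (ip_bounds (c/e)). split; [lia|]. rewrite plus_IZR.
    assert (IZR (Int_part (c/e)) * e <= c).
    { apply Rmult_le_reg_r with (/ e); [apply Rinv_0_lt_compat; lra|].
      rewrite Rmult_assoc, Rinv_r by lra. lra. }
    assert (c < (IZR (Int_part (c/e)) + 1) * e).
    { apply Rmult_lt_reg_r with (/ e); [apply Rinv_0_lt_compat; lra|].
      rewrite Rmult_assoc, Rinv_r by lra. unfold Rdiv in H1. lra. }
    lra. }
  destruct (Rlt_or_le 0 d) as [Hdp|Hdn].
  - rewrite Rabs_right in Hdab by lra.
    destruct (Hstep a d Ha Hdp) as [q [Hq1 Hq2]].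
    exists (Z.to_nat q * m)%nat, (q * p)%Z. split; [nia|].
    rewrite mult_INR, mult_IZR, INR_IZR_INZ, Z2Nat.id by lia.
    replace (IZR q * INR m * th - IZR q * IZR p) with (IZR q * d) by (unfold d; ring). lra.
  - assert (d < 0) by lra. rewrite Rabs_left in Hdab by lra.
    destruct (Hstep (1 - b) (-d) ltac:(lra) ltac:(lra)) as [q [Hq1 Hq2]].
    exists (Z.to_nat q * m)%nat, (q * p - 1)%Z. split; [nia|].
    rewrite mult_INR, minus_IZR, mult_IZR, INR_IZR_INZ, Z2Nat.id by lia.
    replace (IZR q * INR m * th - (IZR q * IZR p - 1)) with (1 - IZR q * (-d)) by (unfold d; ring). lra.
Qed.


Definition Fr (x : R) : R := x - IZR (Int_part x).
Definition V (u : R) : R := cos (- (PI * u)) / sin (- (PI * u)).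

Lemma Fr_bounds x : 0 <= Fr x < 1.
Proof. unfold Fr; pose proof (ip_bounds x); lra. Qed.

Lemma sin_pos_u u : 0 < u < 1 -> 0 < sin (PI * u).
Proof. intros H. pose proof PI_RGT_0. apply sin_gt_0; nra. Qed.

Lemma Cp_V u : 0 < u < 1 -> Cp (- (PI * u)) = Some (V u).
Proof.
  intros H. unfold Cp, proj, V. pose proof (sin_pos_u u H).
  rewrite sin_neg. destruct (Req_EM_T (- sin (PI*u)) 0); [lra|]. auto.
Qed.

Lemma V_mono u v : 0 < u -> u < v -> v < 1 -> V u < V v.
Proof.
  intros Hu Huv Hv. unfold V. rewrite !cos_neg, !sin_neg.
  pose proof PI_RGT_0.
  assert (sA : 0 < sin (PI*u)) by (apply sin_pos_u; lra).
  assert (sB : 0 < sin (PI*v)) by (apply sin_pos_u; lra).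
  assert (sBA : 0 < sin (PI*v - PI*u)) by (apply sin_gt_0; nra).
  rewrite sin_minus in sBA.
  assert (cos (PI*v) / - sin (PI*v) - cos (PI*u) / - sin (PI*u) =
          (sin (PI*v) * cos (PI*u) - cos (PI*v) * sin (PI*u)) / (sin (PI*u) * sin (PI*v))) by
    (field; lra).
  assert (0 < (sin (PI*v) * cos (PI*u) - cos (PI*v) * sin (PI*u)) / (sin (PI*u) * sin (PI*v))).
  { apply Rdiv_lt_0_compat; nra. }
  lra.
Qed.

Lemma V_atan y : V ((PI/2 + atan y) / PI) = y.
Proof.
  unfold V. pose proof PI_RGT_0.
  replace (PI * ((PI/2 + atan y)/PI)) with (PI/2 + atan y) by (field; lra).
  rewrite cos_neg, sin_neg, cos_plus, sin_plus, cos_PI2, sin_PI2.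
  pose proof (atan_bound y). assert (0 < cos (atan y)) by (apply cos_gt_0; lra).
  transitivity (sin (atan y) / cos (atan y)); [field; lra|]. exact (atan_right_inv y).
Qed.

Lemma carry th n :
  let c := (Int_part (INR (S n) * th) - Int_part (INR n * th) - Int_part th)%Z in
  (c = 1%Z /\ Fr (INR (S n) * th) < Fr (INR n * th)) \/
  (c = 0%Z /\ Fr (INR n * th) <= Fr (INR (S n) * th)).
Proof.
  intros c.
  assert (E : Fr (INR (S n) * th) = Fr (INR n * th) + Fr th - IZR c).
  { unfold Fr, c. rewrite !minus_IZR, S_INR. ring. }
  pose proof (Fr_bounds (INR (S n) * th)). pose proof (Fr_bounds (INR n * th)). pose proof (Fr_bounds th).
  assert (IZR c < 2) by lra. assert (-1 < IZR c) by lra.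
  apply lt_IZR in H2. apply lt_IZR in H3.
  assert (c = 0 \/ c = 1)%Z as [->| ->] by lia.
  - right. split; auto. rewrite E. lra.
  - left. split; auto. rewrite E. lra.
Qed.

Lemma floor_eq th ph :
  (forall n m, (1 <= n)%nat -> (1 <= m)%nat ->
     (Fr (INR n * th) < Fr (INR m * th) <-> Fr (INR n * ph) < Fr (INR m * ph))) ->
  th - IZR (Int_part th) = ph - IZR (Int_part ph).
Proof.
  intros Hord.
  set (D := fun x n => IZR (Int_part (INR n * x)) - INR n * IZR (Int_part x)).
  assert (HD : forall n, D th (S n) = D ph (S n)).
  { induction n.
    - unfold D. simpl INR. rewrite !Rmult_1_l. ring.
    - assert (Hs : forall x, D x (S (S n)) = D x (S n) +
         IZR (Int_part (INR (S (S n)) * x) - Int_part (INR (S n) * x) - Int_part x)).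
      { intros x. unfold D. rewrite !minus_IZR. rewrite (S_INR (S n)). ring. }
      rewrite !Hs, IHn. f_equal. f_equal.
      pose proof (carry th (S n)) as Ct. pose proof (carry ph (S n)) as Cq.
      cbv zeta in Ct, Cq.
      pose proof (Hord (S (S n)) (S n) ltac:(lia) ltac:(lia)).
      destruct Ct as [[E1 L1]|[E1 L1]]; destruct Cq as [[E2 L2]|[E2 L2]];
        rewrite ?E1, ?E2; auto; exfalso.
      + apply H in L1. lra.
      + apply H in L2. lra. }
  set (Dl := (th - IZR (Int_part th)) - (ph - IZR (Int_part ph))).
  assert (Hb : forall n, Rabs (INR (S n) * Dl) < 1).
  { intros n. assert (INR (S n) * Dl = Fr (INR (S n) * th) - Fr (INR (S n) * ph)).
    { unfold Fr, Dl. pose proof (HD n). unfold D in H. lra. }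
    rewrite H. pose proof (Fr_bounds (INR (S n) * th)). pose proof (Fr_bounds (INR (S n) * ph)).
    apply Rabs_def1; lra. }
  destruct (Req_dec Dl 0) as [E|E]; [unfold Dl in E; lra|].
  exfalso. destruct (archimed_cor1 (Rabs Dl) (Rabs_pos_lt _ E)) as [N [HN HN0]].
  destruct N as [|N]; [lia|]. specialize (Hb N).
  rewrite Rabs_mult, (Rabs_right (INR (S N))) in Hb by (apply Rle_ge, pos_INR).
  assert (0 < INR (S N)) by (apply lt_0_INR; lia).
  apply (Rmult_lt_compat_l (INR (S N))) in HN; auto. rewrite Rinv_r in HN by lra. lra.
Qed.


Lemma sin_nat_nz al n : ~ rational (al/PI) -> (1 <= n)%nat -> sin (INR n * al) <> 0.
Proof.
  intros Hirr Hn E. apply sin_eq_0_0 in E. destruct E as [z Hz]. apply Hirr.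
  exists z, (Z.of_nat n). split; [lia|]. rewrite <- INR_IZR_INZ.
  assert (0 < INR n) by (apply lt_0_INR; lia). pose proof PI_RGT_0.
  replace (al/PI) with ((INR n * al)/PI/INR n) by (field; lra). rewrite Hz. field. lra.
Qed.

Lemma Fr_pos x : sin (PI * x) <> 0 -> 0 < Fr x < 1.
Proof.
  intros Hs. pose proof (Fr_bounds x). split; [|lra].
  destruct (Req_dec (Fr x) 0) as [E|E]; [|lra]. exfalso. apply Hs. apply sin_eq_0_1.
  exists (Int_part x). unfold Fr in E. replace x with (IZR (Int_part x)) at 1 by lra. ring.
Qed.

Lemma Cp_Fr x : Cp (- (PI * x)) = Cp (- (PI * Fr x)).
Proof.
  rewrite <- (Cp_period (- (PI * Fr x)) (- Int_part x)). f_equal. rewrite opp_IZR. unfold Fr. ring.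
Qed.

Lemma incr_iff (k : R -> R) : (forall x y, x < y -> k x < k y) ->
  forall x y, x < y <-> k x < k y.
Proof.
  intros Hk x y. split; auto. intros H. destruct (Rtotal_order x y) as [|[E|E]]; auto.
  - subst; lra.
  - apply Hk in E; lra.
Qed.

Lemma core al be (h : Rbar -> Rbar) (k : R -> R) :
  ~ rational (al/PI) -> h None = None -> (forall x, h (Some x) = Some (k x)) ->
  (forall x y, x < y -> k x < k y) ->
  (forall t s, h (Cp t) = Cp s -> h (Cp (t - al)) = Cp (s - be)) ->
  forall x, k x = x.
Proof.
  intros Hirr HN Hk Hinc Hrel.
  pose proof PI_RGT_0 as HPI.
  assert (Horb : forall n:nat, h (Cp (- INR n * al)) = Cp (- INR n * be)).
  { induction n.
    - simpl. replace (-0*al) with 0 by ring. replace (-0*be) with 0 by ring. rewrite Cp_0; auto.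
    - rewrite S_INR. replace (-(INR n + 1)*al) with (-INR n*al - al) by ring.
      replace (-(INR n + 1)*be) with (-INR n*be - be) by ring. apply Hrel; auto. }
  set (th := al / PI). set (ph := be / PI).
  assert (Hal : forall n, - INR n * al = - (PI * (INR n * th))) by (intros; unfold th; field; lra).
  assert (Hbe : forall n, - INR n * be = - (PI * (INR n * ph))) by (intros; unfold ph; field; lra).
  assert (Hfa : forall n, (1 <= n)%nat -> 0 < Fr (INR n * th) < 1).
  { intros n Hn. apply Fr_pos. replace (PI * (INR n * th)) with (INR n * al) by (unfold th; field; lra).
    apply sin_nat_nz; auto. }
  assert (Hkey : forall n, (1 <= n)%nat -> 0 < Fr (INR n * ph) < 1 /\
             k (V (Fr (INR n * th))) = V (Fr (INR n * ph))).
  { intros n Hn. pose proof (Horb n) as Ho. rewrite Hal, Hbe, (Cp_Fr (INR n * th)), (Cp_Fr (INR n * ph)) in Ho.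
    rewrite (Cp_V _ (Hfa n Hn)), Hk in Ho.
    assert (Hs : sin (PI * (INR n * ph)) <> 0).
    { intro E. rewrite <- Cp_Fr in Ho. unfold Cp, proj in Ho. rewrite sin_neg in Ho.
      destruct (Req_EM_T (- sin (PI * (INR n * ph))) 0); [discriminate|lra]. }
    pose proof (Fr_pos _ Hs). split; auto. rewrite Cp_V in Ho by auto. congruence. }
  assert (Hord : forall n m, (1 <= n)%nat -> (1 <= m)%nat ->
     (Fr (INR n * th) < Fr (INR m * th) <-> Fr (INR n * ph) < Fr (INR m * ph))).
  { intros n m Hn Hm. destruct (Hkey n Hn) as [Hn1 Hn2]. destruct (Hkey m Hm) as [Hm1 Hm2].
    pose proof (Hfa n Hn). pose proof (Hfa m Hm).
    assert (Vi : forall u v, 0 < u < 1 -> 0 < v < 1 -> (u < v <-> V u < V v)).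
    { intros u v Hu Hv. split; [intros; apply V_mono; lra|]. intros HV.
      destruct (Rtotal_order u v) as [|[E|E]]; auto. subst; lra.
      pose proof (V_mono v u ltac:(lra) E ltac:(lra)). lra. }
    rewrite (Vi _ _ H H0), (incr_iff k Hinc), Hn2, Hm2. symmetry. apply Vi; auto. }
  pose proof (floor_eq th ph Hord) as Hfe.
  set (z := (Int_part ph - Int_part th)%Z).
  assert (Hbz : be = al + IZR z * PI).
  { assert (E1 : ph = th + IZR z) by (unfold z; rewrite minus_IZR; lra).
    assert (E2 : be = PI * ph) by (unfold ph; field; lra).
    assert (E3 : al = PI * th) by (unfold th; field; lra).
    rewrite E2, E3, E1. ring. }
  assert (Hfix : forall n, h (Cp (- INR n * al)) = Cp (- INR n * al)).
  { intros n. rewrite Horb. rewrite <- (Cp_period (- INR n * al) (- (Z.of_nat n * z))).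
    f_equal. rewrite Hbz. rewrite opp_IZR, mult_IZR, <- INR_IZR_INZ. ring. }
  assert (Hdense : forall y1 y2, y1 < y2 -> exists w, y1 < w < y2 /\ k w = w).
  { intros y1 y2 Hy.
    set (a0 := (PI/2 + atan y1)/PI). set (b0 := (PI/2 + atan y2)/PI).
    pose proof (atan_bound y1). pose proof (atan_bound y2).
    assert (atan y1 < atan y2).
    { destruct (Rtotal_order (atan y1) (atan y2)) as [|[E|E]]; auto.
      - rewrite <- (atan_right_inv y1), <- (atan_right_inv y2), E in Hy. lra.
      - exfalso. assert (HV : V b0 < V a0) by (apply V_mono; unfold a0, b0;
          [apply Rdiv_lt_0_compat; lra| apply Rmult_lt_compat_r; [apply Rinv_0_lt_compat; lra|lra]
          | apply (Rmult_lt_reg_r PI); auto; unfold Rdiv; rewrite Rmult_assoc, Rinv_l; lra]).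
        unfold a0, b0 in HV. rewrite !V_atan in HV. lra. }
    assert (0 < a0) by (unfold a0; apply Rdiv_lt_0_compat; lra).
    assert (a0 < b0) by (unfold a0, b0; apply Rmult_lt_compat_r; [apply Rinv_0_lt_compat; lra|lra]).
    assert (b0 < 1) by (unfold b0; apply (Rmult_lt_reg_r PI); auto; unfold Rdiv;
      rewrite Rmult_assoc, Rinv_l; lra).
    destruct (density th a0 b0 Hirr ltac:(lra) H3 ltac:(lra)) as [n [j [Hn Hnj]]].
    set (u := INR n * th - IZR j) in Hnj.
    exists (V u). split.
    - split.
      + rewrite <- (V_atan y1). fold a0. apply V_mono; lra.
      + rewrite <- (V_atan y2). fold b0. apply V_mono; lra.
    - pose proof (Hfix n) as Hf. rewrite Hal in Hf.
      rewrite <- (Cp_period (- (PI * (INR n * th))) j) in Hf.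
      replace (- (PI * (INR n * th)) + IZR j * PI) with (- (PI * u)) in Hf by (unfold u; ring).
      rewrite Cp_V in Hf by lra. rewrite Hk in Hf. congruence. }
  intros x. destruct (Rtotal_order (k x) x) as [Hl|[E|Hg]]; auto; exfalso.
  - destruct (Hdense (k x) x Hl) as [w [[Hw1 Hw2] Hkw]].
    apply Hinc in Hw2. lra.
  - destruct (Hdense x (k x) Hg) as [w [[Hw1 Hw2] Hkw]].
    apply Hinc in Hw1. lra.
Qed.


Lemma cs_nz t : ~ (cos t = 0 /\ sin t = 0).
Proof. intros [H1 H2]. pose proof (sin2_cos2 t). unfold Rsqr in H. rewrite H1, H2 in H. lra. Qed.

Lemma param m1 m2 m3 m4 x1 x2 y1 y2 r be : r <> 0 -> x1*y2 - y1*x2 <> 0 ->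
  m1*x1+m2*x2 = r*cos be*x1 - r*sin be*y1 ->
  m3*x1+m4*x2 = r*cos be*x2 - r*sin be*y2 ->
  m1*y1+m2*y2 = r*sin be*x1 + r*cos be*y1 ->
  m3*y1+m4*y2 = r*sin be*x2 + r*cos be*y2 ->
  forall t, mobius m1 m2 m3 m4 (mobius x1 y1 x2 y2 (Cp t)) = mobius x1 y1 x2 y2 (Cp (t - be)).
Proof.
  intros Hr Hd H1 H2 H3 H4 t. unfold Cp.
  rewrite (mob_proj x1 y1 x2 y2) by apply cs_nz.
  rewrite mob_proj by (apply vec_nz; [auto|apply cs_nz]).
  rewrite mob_proj by apply cs_nz.
  rewrite cos_minus, sin_minus.
  match goal with |- _ = proj ?X ?Y => transitivity (proj (r*X) (r*Y)); [f_equal|apply proj_scale; auto] end.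
  - transitivity (cos t*(m1*x1+m2*x2) + sin t*(m1*y1+m2*y2)); [ring|]. rewrite H1, H3. ring.
  - transitivity (cos t*(m3*x1+m4*x2) + sin t*(m3*y1+m4*y2)); [ring|]. rewrite H2, H4. ring.
Qed.

Lemma polar u v : 0 < v -> exists r be, 0 < r /\ u = r * cos be /\ v = r * sin be.
Proof.
  intros Hv. set (s := sqrt (1 + (u/v)²)).
  assert (Hs : 0 < s) by (unfold s; apply sqrt_lt_R0; pose proof (Rle_0_sqr (u/v)); lra).
  exists (v * s), (PI/2 - atan (u/v)). split; [nra|].
  rewrite cos_shift, sin_shift, sin_atan, cos_atan. fold s. split; field; lra.
Qed.

Lemma eig_det a b c d u v x1 y1 x2 y2 : v <> 0 ->
  ~ (x1 = 0 /\ y1 = 0 /\ x2 = 0 /\ y2 = 0) ->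
  a * x1 + b * x2 = u * x1 - v * y1 ->
  a * y1 + b * y2 = u * y1 + v * x1 ->
  c * x1 + d * x2 = u * x2 - v * y2 ->
  c * y1 + d * y2 = u * y2 + v * x2 -> x1*y2 - y1*x2 <> 0.
Proof.
  intros Hv Hnz H1 H2 H3 H4 E.
  assert (Ea : v*(x1*x1+y1*y1) = b*(x1*y2-y1*x2)).
  { transitivity (x1*(v*x1) + y1*(v*y1)); [ring|].
    replace (v*x1) with (a*y1+b*y2 - u*y1) by lra. replace (v*y1) with (u*x1 - a*x1 - b*x2) by lra. ring. }
  assert (Eb : v*(x2*x2+y2*y2) = - c*(x1*y2-y1*x2)).
  { transitivity (x2*(v*x2) + y2*(v*y2)); [ring|].
    replace (v*x2) with (c*y1+d*y2 - u*y2) by lra. replace (v*y2) with (u*x2 - c*x1 - d*x2) by lra. ring. }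
  rewrite E in Ea, Eb. apply Hnz.
  assert (x1*x1+y1*y1 = 0) by (apply (Rmult_eq_reg_l v); [lra|auto]).
  assert (x2*x2+y2*y2 = 0) by (apply (Rmult_eq_reg_l v); [lra|auto]).
  repeat split; nra.
Qed.

Lemma no_fix_disc q1 q2 q3 q4 : q1*q4 - q2*q3 <> 0 ->
  (forall x, mobius q1 q2 q3 q4 x <> x) -> (q4 - q1)*(q4 - q1) + 4*q2*q3 < 0.
Proof.
  intros Hd Hnf.
  assert (Hq3 : q3 <> 0).
  { intro E. apply (Hnf None). simpl. destruct (Req_EM_T q3 0); [auto|contradiction]. }
  destruct (Rlt_or_le ((q4 - q1)*(q4 - q1) + 4*q2*q3) 0) as [H|H]; auto. exfalso.
  set (D := (q4 - q1)*(q4 - q1) + 4*q2*q3) in H.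
  set (s := sqrt D). assert (Hs : s * s = D) by (apply sqrt_sqrt; auto).
  set (x := ((q1 - q4) + s)/(2*q3)).
  assert (Hx : q3*x*x + (q4 - q1)*x - q2 = 0).
  { apply (Rmult_eq_reg_l (4*q3)); [|lra]. unfold x. field_simplify; [|auto].
    unfold D in Hs. nra. }
  apply (Hnf (Some x)). simpl. destruct (Req_EM_T (q3*x+q4) 0) as [E|E].
  - exfalso. apply (vec_nz q1 q2 q3 q4 x 1 Hd ltac:(lra)). split; nra.
  - f_equal. field_simplify_eq; auto. nra.
Qed.


Lemma comp_ex a b c d a' b' c' d' : a*d-b*c <> 0 -> a'*d'-b'*c' <> 0 ->
  exists A B C D, A*D-B*C <> 0 /\
    forall x, mobius a b c d (mobius a' b' c' d' x) = mobius A B C D x.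
Proof.
  intros H1 H2. exists (a*a'+b*c'), (a*b'+b*d'), (c*a'+d*c'), (c*b'+d*d'). split.
  - replace ((a*a'+b*c')*(c*b'+d*d') - (a*b'+b*d')*(c*a'+d*c')) with ((a*d-b*c)*(a'*d'-b'*c')) by ring.
    intro E. destruct (Rmult_integral _ _ E); auto.
  - intros x. apply mob_comp; auto.
Qed.

Lemma rot_det c : cos c * cos c - - sin c * sin c <> 0.
Proof. pose proof (sin2_cos2 c). unfold Rsqr in H. lra. Qed.

Lemma rot_inv c z : mobius (cos c) (- sin c) (sin c) (cos c)
   (mobius (cos (-c)) (- sin (-c)) (sin (-c)) (cos (-c)) z) = z.
Proof.
  destruct (Cp_surj z) as [s ->]. rewrite <- !Cp_shift. f_equal. ring.
Qed.

Lemma rot_inv2 c z : mobius (cos (-c)) (- sin (-c)) (sin (-c)) (cos (-c))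
   (mobius (cos c) (- sin c) (sin c) (cos c) z) = z.
Proof.
  destruct (Cp_surj z) as [s ->]. rewrite <- !Cp_shift. f_equal. ring.
Qed.

Lemma J_Cp s : mobius (-1) 0 0 1 (Cp s) = Cp (- s).
Proof.
  unfold Cp. rewrite mob_proj by apply cs_nz. rewrite cos_neg, sin_neg.
  rewrite <- (proj_scale (-1)) by lra. f_equal; ring.
Qed.

Lemma J_Some r : mobius (-1) 0 0 1 (Some r) = Some (- r).
Proof. simpl. destruct (Req_EM_T (0*r+1) 0); [lra|]. f_equal. field. Qed.

Lemma J_None : mobius (-1) 0 0 1 None = None.
Proof. simpl. destruct (Req_EM_T 0 0); [auto|lra]. Qed.

Lemma JJ z : mobius (-1) 0 0 1 (mobius (-1) 0 0 1 z) = z.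
Proof. destruct z. - rewrite !J_Some. f_equal; ring. - rewrite !J_None; auto. Qed.

Theorem theorem12p6
  (p1 p2 p3 p4 q1 q2 q3 q4 alpha : R)
  (hP : p1 * p4 - p2 * p3 <> 0)
  (hQ : q1 * q4 - q2 * q3 <> 0)
  (halpha : - (PI / 2) < alpha <= PI / 2)
  (hirr : ~ rational (alpha / PI))
  (heig1 : complex_eigenvalue p1 p2 p3 p4 (cos alpha) (sin alpha))
  (heig2 : complex_eigenvalue p1 p2 p3 p4 (cos alpha) (- sin alpha))
  (f : Rbar -> Rbar)
  (hf : homeomorphism_Rbar f)
  (hconj : forall x : Rbar, f (mobius p1 p2 p3 p4 x) = mobius q1 q2 q3 q4 (f x)) :
  exists a b c d : R, a * d - b * c <> 0 /\ forall x : Rbar, f x = mobius a b c d x.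
Proof.
  destruct hf as [g [Hgf [Hfg [Hcf Hcg]]]].
  destruct heig1 as [x1 [y1 [x2 [y2 [Hnz [E1 [E2 [E3 E4]]]]]]]].
  assert (Hsa : sin alpha <> 0).
  { pose proof (sin_nat_nz alpha 1 hirr (le_n 1)) as H. simpl INR in H. rewrite Rmult_1_l in H. auto. }
  assert (HdP : x1*y2 - y1*x2 <> 0) by (eapply eig_det; eauto).
  assert (HPpar : forall t, mobius p1 p2 p3 p4 (mobius x1 y1 x2 y2 (Cp t)) =
                            mobius x1 y1 x2 y2 (Cp (t - alpha))).
  { apply (param p1 p2 p3 p4 x1 x2 y1 y2 1 alpha); auto; lra. }
  assert (HSP1 : forall z, mobius y2 (-y1) (-x2) x1 (mobius x1 y1 x2 y2 z) = z) by (intros; apply mob_inv; auto).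
  assert (HSP2 : forall z, mobius x1 y1 x2 y2 (mobius y2 (-y1) (-x2) x1 z) = z) by (intros; apply mob_inv'; auto).
  assert (HPnf : forall z, mobius p1 p2 p3 p4 z <> z).
  { intros z Hz. destruct (Cp_surj (mobius y2 (-y1) (-x2) x1 z)) as [t Ht].
    assert (Ez : z = mobius x1 y1 x2 y2 (Cp t)) by (rewrite <- Ht; auto).
    rewrite Ez, HPpar in Hz. apply (f_equal (mobius y2 (-y1) (-x2) x1)) in Hz. rewrite !HSP1 in Hz.
    apply (Cp_eq_shift _ _ (-t)) in Hz. replace (t - alpha + - t) with (- alpha) in Hz by ring.
    replace (t + - t) with 0 in Hz by ring. rewrite Cp_0 in Hz. apply Cp_None in Hz.
    rewrite sin_neg in Hz. lra. }
  assert (HQnf : forall y, mobius q1 q2 q3 q4 y <> y).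
  { intros y Hy. apply (HPnf (g y)). rewrite <- (Hgf (mobius p1 p2 p3 p4 (g y))), hconj, Hfg, Hy. auto. }
  pose proof (no_fix_disc q1 q2 q3 q4 hQ HQnf) as Hdisc.
  set (u := (q1 + q4)/2).
  set (v := sqrt (- ((q4 - q1)*(q4 - q1) + 4*q2*q3)) / 2).
  assert (Hv : 0 < v) by (unfold v; apply Rdiv_lt_0_compat; [apply sqrt_lt_R0|]; lra).
  assert (Hvv : v * v = - ((q4 - q1)*(q4 - q1) + 4*q2*q3) / 4).
  { unfold v. replace (sqrt (- ((q4 - q1)*(q4 - q1) + 4*q2*q3)) / 2 *
      (sqrt (- ((q4 - q1)*(q4 - q1) + 4*q2*q3)) / 2)) with
      (sqrt (- ((q4 - q1)*(q4 - q1) + 4*q2*q3)) * sqrt (- ((q4 - q1)*(q4 - q1) + 4*q2*q3)) / 4) by field.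
    rewrite sqrt_sqrt by lra. auto. }
  assert (Hq2 : q2 <> 0) by (intro E; rewrite E in Hdisc; pose proof (Rle_0_sqr (q4 - q1)) as Hsq; unfold Rsqr in Hsq; lra).
  destruct (polar u v Hv) as [r [be [Hr [Hu Hv2]]]].
  assert (HdQ : q2 * v - 0 * (u - q1) <> 0) by (intro; nra).
  assert (HQpar : forall s, mobius q1 q2 q3 q4 (mobius q2 0 (u - q1) v (Cp s)) =
                            mobius q2 0 (u - q1) v (Cp (s - be))).
  { apply (param q1 q2 q3 q4 q2 (u - q1) 0 v r be); auto; try lra; rewrite <- Hu, <- Hv2;
    try rewrite Hvv; unfold u; field. }
  assert (HSQ1 : forall z, mobius v (-0) (-(u-q1)) q2 (mobius q2 0 (u - q1) v z) = z)
    by (intros; apply mob_inv; auto).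
  assert (HSQ2 : forall z, mobius q2 0 (u - q1) v (mobius v (-0) (-(u-q1)) q2 z) = z)
    by (intros; apply mob_inv'; auto).
  destruct (Cp_surj (mobius v (-0) (-(u-q1)) q2 (f (mobius x1 y1 x2 y2 (Cp 0))))) as [c Hc].
  assert (Hc2 : f (mobius x1 y1 x2 y2 (Cp 0)) = mobius q2 0 (u - q1) v (Cp c))
    by (rewrite <- Hc, HSQ2; auto).
  set (h := fun z => mobius (cos (-c)) (- sin (-c)) (sin (-c)) (cos (-c))
                       (mobius v (-0) (-(u-q1)) q2 (f (mobius x1 y1 x2 y2 z)))).
  assert (hN : h None = None).
  { rewrite <- Cp_0. unfold h. rewrite Hc2, HSQ1, <- Cp_shift. rewrite Rplus_opp_r. auto. }
  assert (Hrel : forall t s, h (Cp t) = Cp s -> h (Cp (t - alpha)) = Cp (s - be)).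
  { intros t s H. unfold h in *.
    assert (Hf1 : f (mobius x1 y1 x2 y2 (Cp t)) = mobius q2 0 (u - q1) v (Cp (s + c))).
    { rewrite <- (HSQ2 (f (mobius x1 y1 x2 y2 (Cp t)))).
      rewrite <- (rot_inv c (mobius v (-0) (-(u-q1)) q2 (f (mobius x1 y1 x2 y2 (Cp t))))).
      rewrite H, <- Cp_shift. auto. }
    rewrite <- HPpar, hconj, Hf1, HQpar, HSQ1, <- Cp_shift. f_equal; ring. }
  assert (Hhc : continuous_Rbar h).
  { unfold h. apply cont_comp; [apply mob_cont, rot_det|].
    apply cont_comp; [apply mob_cont; intro; apply HdQ; lra|].
    apply cont_comp; [auto|apply mob_cont; auto]. }
  assert (Hhi : forall z1 z2, h z1 = h z2 -> z1 = z2).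
  { intros z1 z2 H. unfold h in H. apply (f_equal (mobius (cos c) (- sin c) (sin c) (cos c))) in H.
    rewrite !rot_inv in H. apply (f_equal (mobius q2 0 (u - q1) v)) in H. rewrite !HSQ2 in H.
    apply (f_equal g) in H. rewrite !Hgf in H. apply (f_equal (mobius y2 (-y1) (-x2) x1)) in H.
    rewrite !HSP1 in H. auto. }
  set (k := fun x => match h (Some x) with Some r => r | None => 0 end).
  assert (Hk : forall x, h (Some x) = Some (k x)).
  { intros x. unfold k. destruct (h (Some x)) eqn:E; auto. rewrite <- hN in E. apply Hhi in E. discriminate. }
  assert (Hkc : continuity k) by (apply (k_cont h); auto).
  assert (Hki : forall x y, k x = k y -> x = y).
  { intros x y E. assert (h (Some x) = h (Some y)) by (rewrite !Hk, E; auto). apply Hhi in H. congruence. }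
  assert (Hmain : exists e, e <> 0 /\ forall z, h z = mobius e 0 0 1 z).
  { destruct (inj_mono k Hkc Hki) as [Hinc|Hdec].
    - exists 1. split; [lra|]. intros z. rewrite mob_scalar by lra. destruct z as [x|]; auto.
      rewrite Hk. f_equal. apply (core alpha be h k); auto.
    - exists (-1). split; [lra|].
      set (h' := fun z => mobius (-1) 0 0 1 (h z)).
      assert (Hid : forall x, - k x = x).
      { apply (core alpha (- be) h' (fun x => - k x)); auto.
        - unfold h'. rewrite hN. apply J_None.
        - intros x. unfold h'. rewrite Hk. apply J_Some.
        - intros x y Hxy. apply Hdec in Hxy. lra.
        - intros t s H. unfold h' in *.
          assert (H2 : h (Cp t) = Cp (- s)) by (rewrite <- J_Cp, <- H, JJ; auto).
          apply Hrel in H2. rewrite H2, J_Cp. f_equal; ring. }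
      intros z. destruct z as [x|].
      + rewrite Hk, J_Some. f_equal. rewrite <- (Hid x) at 2. ring.
      + rewrite hN, J_None; auto. }
  destruct Hmain as [e [He Hh]].
  assert (Hf : forall x, f x = mobius q2 0 (u - q1) v (mobius (cos c) (- sin c) (sin c) (cos c)
                  (mobius e 0 0 1 (mobius y2 (-y1) (-x2) x1 x)))).
  { intros x. rewrite <- Hh. unfold h. rewrite rot_inv, HSQ2, HSP2. auto. }
  destruct (comp_ex e 0 0 1 y2 (-y1) (-x2) x1) as [a3 [b3 [c3 [d3 [Hd3 H3]]]]].
  { lra. } { intro; apply HdP; lra. }
  destruct (comp_ex (cos c) (- sin c) (sin c) (cos c) a3 b3 c3 d3) as [a2 [b2 [c2 [d2 [Hd2 H2]]]]].
  { apply rot_det. } { auto. }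
  destruct (comp_ex q2 0 (u - q1) v a2 b2 c2 d2) as [a1 [b1 [c1 [d1 [Hd1 H1]]]]].
  { auto. } { auto. }
  exists a1, b1, c1, d1. split; auto. intros x. rewrite Hf, H3, H2, H1. auto.
Qed.
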